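(* Let $a<b$ and let $f:[a,b]\rightarrow\mathbb{R}$ be a twice continuously differentiable mapping in $(a,b)$ with $f''\in L^2[a,b]$. Then \[ \left|\frac{f\left(\frac{3a+b}{4}\right)+f\left(\frac{a+3b}{4}\right)}{2} -\frac{1}{b-a}\int_{a}^{b}f(t)\,dt\right|\leq \frac{(b-a)^{3/2}}{4\sqrt{3}\pi}\|f''\|_2. \]
   Context: $\|g\|_2=\left(\int_a^b g(t)^2\,dt\right)^{1/2}$. *)

(* Defs.v *)
From HB Require Import structures.
From mathcomp Require Import all_boot all_order all_algebra.
From mathcomp Require Import all_classical all_reals all_analysis.
Set Implicit Arguments. Unset Strict Implicit. Unset Printing Implicit Defensive.

(* Main.v *)
Require Import Defs.
From HB Require Import structures.
From mathcomp Require Import all_boot all_order all_algebra.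
From mathcomp Require Import all_classical all_reals all_analysis.
From mathcomp Require Import ring lra measurable_realfun.
Import Order.TTheory GRing.Theory Num.Theory.
Import numFieldNormedType.Exports.
Local Open Scope classical_set_scope.
Local Open Scope ring_scope.
Set Implicit Arguments. Unset Strict Implicit. Unset Printing Implicit Defensive.

Lemma mvt_bound (R : realType) (G P dG dP : R -> R) (u v : R) :
  u <= v ->
  (forall x, x \in `]u, v[ -> is_derive x 1 G (dG x)) ->
  (forall x, x \in `]u, v[ -> is_derive x 1 P (dP x)) ->
  {within `[u, v], continuous G} -> {within `[u, v], continuous P} ->
  (forall x, x \in `]u, v[ -> `|dG x| <= dP x) ->
  `|G v - G u| <= P v - P u.
Proof.
move=> uv dG' dP' cG cP le.
have [->|ltuv] := eqVneq u v; first by rewrite !subrr normr0.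
have {}uv : u < v by rewrite lt_neqAle ltuv.
have cPG : {within `[u, v], continuous (P - G)}.
  by move=> x; exact: (continuousB (cP x) (cG x)).
have cPG' : {within `[u, v], continuous (P + G)}.
  by move=> x; exact: (continuousD (cP x) (cG x)).
have [c1 c1I E1] := @MVT R (P - G) (dP - dG) u v uv
   (fun x hx => is_deriveB (dP' x hx) (dG' x hx)) cPG.
have [c2 c2I E2] := @MVT R (P + G) (dP + dG) u v uv
   (fun x hx => is_deriveD (dP' x hx) (dG' x hx)) cPG'.
move: E1 E2 => /=.
have := le c1 c1I; have := le c2 c2I.
have : 0 < v - u by rewrite subr_gt0.
set w := v - u => w0 l2 l1 E1 E2.
have {}E1 : P v - G v - (P u - G u) = (dP c1 - dG c1) * w by exact: E1.
have {}E2 : P v + G v - (P u + G u) = (dP c2 + dG c2) * w by exact: E2.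
rewrite ler_norml; apply/andP; split.
  have : 0 <= (dP c2 + dG c2) * w.
    apply: mulr_ge0; last exact: ltW.
    by move: l2; rewrite ler_norml => /andP[h1 h2]; lra.
  rewrite -E2; lra.
have : 0 <= (dP c1 - dG c1) * w.
  apply: mulr_ge0; last exact: ltW.
  by move: l1; rewrite ler_norml => /andP[h1 h2]; lra.
rewrite -E1; lra.
Qed.

Lemma wcM (R : realType) (A : set R) (f g : R -> R) :
  {within A, continuous f} -> {within A, continuous g} ->
  {within A, continuous (fun x => f x * g x)}.
Proof. by move=> cf cg x; exact: (continuousM (cf x) (cg x)). Qed.

Lemma wcD (R : realType) (A : set R) (f g : R -> R) :
  {within A, continuous f} -> {within A, continuous g} ->
  {within A, continuous (fun x => f x + g x)}.
Proof. by move=> cf cg x; exact: (continuousD (cf x) (cg x)). Qed.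

Lemma wcC (R : realType) (A : set R) (r : R) :
  {within A, continuous (fun _ : R => r)}.
Proof. by move=> x; exact: cst_continuous. Qed.

Lemma cont_int (R : realType) (g : R -> R) (c s : R) :
  {within `[c, s], continuous g} ->
  lebesgue_measure.-integrable `[c, s] (EFin \o g).
Proof.
by move=> cg; apply: continuous_compact_integrable => //; exact: segment_compact.
Qed.

Lemma mu_itv (R : realType) (c s : R) : c <= s ->
  fine (lebesgue_measure (`[c, s] : set R)) = s - c.
Proof.
move=> cs; rewrite lebesgue_measure_itv/= lte_fin.
have [->|ltcs] := eqVneq c s; first by rewrite ltxx subrr.
by rewrite lt_neqAle ltcs cs.
Qed.

Lemma cs_int (R : realType) (g : R -> R) (c s : R) : c < s ->
  {within `[c, s], continuous g} ->
  (Rintegral lebesgue_measure `[c, s] g) ^+ 2 <=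
  (s - c) * Rintegral lebesgue_measure `[c, s] (fun x => g x ^+ 2).
Proof.
move=> cs cg.
set A := Rintegral lebesgue_measure `[c, s] g.
set B := Rintegral lebesgue_measure `[c, s] (fun x => g x ^+ 2).
set l := A / (s - c).
have m : measurable (`[c, s] : set R) by [].
have ig := cont_int cg.
have cg2 : {within `[c, s], continuous (fun x => g x ^+ 2)}.
  exact: wcM.
have ig2 := cont_int cg2.
have icst : forall r : R, lebesgue_measure.-integrable `[c, s] (EFin \o (fun=> r)).
  by move=> r; apply: cont_int; exact: wcC.
have il : lebesgue_measure.-integrable `[c, s] (EFin \o (fun x => - (2 * l) * g x)).
  by apply: cont_int; apply: wcM => //; exact: wcC.
have H0 : 0 <= Rintegral lebesgue_measure `[c, s] (fun x => (g x - l) ^+ 2).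
  by apply: Rintegral_ge0 => x _; exact: sqr_ge0.
have E : Rintegral lebesgue_measure `[c, s] (fun x => (g x - l) ^+ 2) =
    B + (- (2 * l) * A + l ^+ 2 * (s - c)).
  have -> : (fun x => (g x - l) ^+ 2) = (fun x => g x ^+ 2 + (- (2 * l) * g x + l ^+ 2)).
    by apply: funext => x; ring.
  rewrite RintegralD//; last first.
    by apply: cont_int; apply: wcD; [apply: wcM => //|]; exact: wcC.
  rewrite RintegralD// RintegralZl// Rintegral_cst// mu_itv//; exact: ltW.
rewrite E in H0.
have sc : 0 < s - c by rewrite subr_gt0.
rewrite /l in H0.
have : 0 <= (s - c) * (B + (- (2 * (A / (s - c))) * A + (A / (s - c)) ^+ 2 * (s - c))).
  by apply: mulr_ge0 => //; exact: ltW.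
have -> : (s - c) * (B + (- (2 * (A / (s - c))) * A + (A / (s - c)) ^+ 2 * (s - c)))
   = (s - c) * B - A ^+ 2.
  by field; rewrite gt_eqF.
lra.
Qed.

Lemma der_cont (R : realType) (F : R -> R) x : derivable F x 1 -> {for x, continuous F}.
Proof. by move=> d; apply/differentiable_continuous; rewrite -derivable1_diffP. Qed.

Lemma ftc_R (R : realType) (F f : R -> R) (c s : R) : c < s ->
  (forall x, c <= x <= s -> derivable F x 1) ->
  (forall x, c <= x <= s -> {for x, continuous f}) ->
  (forall x, c < x < s -> derive1 F x = f x) ->
  Rintegral lebesgue_measure `[c, s] f = F s - F c.
Proof.
move=> cs dF cf Ff.
rewrite /Rintegral (@continuous_FTC2 R f F c s cs).
- by [].
- apply: continuous_in_subspaceT => x; rewrite inE/= in_itv/= => /andP[h1 h2].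
  by apply: cf; rewrite h1 h2.
- split.
  + by move=> x; rewrite in_itv/= => /andP[h1 h2]; apply: dF; rewrite !ltW.
  + by apply: cvg_at_right_filter; apply: der_cont; apply: dF; rewrite lexx ltW.
  + by apply: cvg_at_left_filter; apply: der_cont; apply: dF; rewrite lexx ltW.
- by move=> x; rewrite in_itv/= => /andP[h1 h2]; apply: Ff; rewrite h1 h2.
Qed.

Lemma sub_int (R : realType) (h : R -> R) (a b c s : R) :
  `[c, s] `<=` `[a, b] -> measurable_fun `[a, b] h -> (forall x, 0 <= h x) ->
  (\int[lebesgue_measure]_(x in `[a, b]) (h x)%:E < +oo)%E ->
  Rintegral lebesgue_measure `[c, s] h <= Rintegral lebesgue_measure `[a, b] h.
Proof.
move=> sub mh h0 fin.
have le : (\int[lebesgue_measure]_(x in `[c, s]) (h x)%:E <= \int[lebesgue_measure]_(x in `[a, b]) (h x)%:E)%E.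
  apply: ge0_subset_integral => //; first exact/measurable_EFinP.
  by move=> x _; rewrite lee_fin.
have g1 : (0 <= \int[lebesgue_measure]_(x in `[c, s]) (h x)%:E)%E.
  by apply: integral_ge0 => x _; rewrite lee_fin.
have g2 : (0 <= \int[lebesgue_measure]_(x in `[a, b]) (h x)%:E)%E.
  by apply: integral_ge0 => x _; rewrite lee_fin.
rewrite /Rintegral fine_le//.
- by rewrite ge0_fin_numE// (le_lt_trans le fin).
- by rewrite ge0_fin_numE.
Qed.

Lemma quad_der (R : realType) (al be ga c x : R) :
  is_derive x 1 (fun s => al * ((s - c) * (s - c)) + be * s + ga) (2 * al * (x - c) + be).
Proof.
apply: is_derive_eq. rewrite !scaler1 addr0. rewrite /GRing.scale /=. ring. Qed.

Lemma cub_der (R : realType) (al be ga c x : R) :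
  is_derive x 1 (fun s => al * ((s - c) * (s - c) * (s - c)) + be * ((s - c) * (s - c)) + ga * s)
    (3 * al * ((x - c) * (x - c)) + 2 * be * (x - c) + ga).
Proof.
apply: is_derive_eq. rewrite !scaler1. rewrite /GRing.scale /=. ring. Qed.

Lemma lin_der (R : realType) (f : R -> R) (r x : R) : derivable f x 1 ->
  is_derive x 1 (fun s => f s - r * s) (derive1 f x - r).
Proof.
move=> d; have := derivableP d; rewrite -derive1E => d'.
apply: is_derive_eq. rewrite /GRing.scale /=. ring. Qed.


Lemma wc_der (R : realType) (F : R -> R) (u v : R) :
  (forall s, u <= s <= v -> derivable F s 1) -> {within `[u, v], continuous F}.
Proof.
move=> dF; apply: continuous_in_subspaceT => x; rewrite inE/= in_itv/= => hx.
exact/der_cont/dF.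
Qed.

Lemma Rint_oo (R : realType) (h : R -> R) (u v : R) :
  measurable_fun `]u, v[ h ->
  Rintegral lebesgue_measure `[u, v] h = Rintegral lebesgue_measure `]u, v[ h.
Proof.
move=> mh; rewrite /Rintegral; congr fine.
by rewrite (@integral_itv_bndoo R u v (EFin \o h) true false)//; exact/measurable_EFinP.
Qed.


Lemma poly_cont (R : realType) (al be ga c : R) :
  continuous (fun x : R => 3 * al * ((x - c) * (x - c)) + 2 * be * (x - c) + ga).
Proof. by move=> x; apply: der_cont; apply: ex_derive. Qed.

Lemma poly_int (R : realType) (al be ga c u v : R) : u < v ->
  Rintegral lebesgue_measure `[u, v]
     (fun x => 3 * al * ((x - c) * (x - c)) + 2 * be * (x - c) + ga) =
  (al * ((v - c) * (v - c) * (v - c)) + be * ((v - c) * (v - c)) + ga * v) -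
  (al * ((u - c) * (u - c) * (u - c)) + be * ((u - c) * (u - c)) + ga * u).
Proof.
move=> uv.
apply: (@ftc_R R (fun s => al * ((s - c) * (s - c) * (s - c)) + be * ((s - c) * (s - c)) + ga * s)) => //.
- by move=> x _; apply: der_cont; apply: ex_derive.
- by move=> x _; rewrite derive1E; have [_ ->] := cub_der al be ga c x.
Qed.

Lemma int_B (R : realType) (i : interval R) (F P : R -> R) :
  lebesgue_measure.-integrable [set` i] (EFin \o F) -> lebesgue_measure.-integrable [set` i] (EFin \o P) ->
  lebesgue_measure.-integrable [set` i] (EFin \o (fun x => F x - P x)).
Proof.
move=> iF iP; apply: eq_integrable (integrableB _ iF iP) => //.
Qed.

Lemma int_est (R : realType) (F P Q : R -> R) (u v : R) : u < v ->
  lebesgue_measure.-integrable `[u, v] (EFin \o F) ->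
  continuous P -> continuous Q ->
  (forall x, u < x < v -> `|F x - P x| <= Q x) ->
  `|Rintegral lebesgue_measure `[u, v] F - Rintegral lebesgue_measure `[u, v] P|
   <= Rintegral lebesgue_measure `[u, v] Q.
Proof.
move=> uv iF cP cQ hb.
have iP : lebesgue_measure.-integrable `[u, v] (EFin \o P).
  by apply: cont_int => x; exact: continuous_subspaceT.
have iQ : lebesgue_measure.-integrable `[u, v] (EFin \o Q).
  by apply: cont_int => x; exact: continuous_subspaceT.
have sub : `]u, v[ `<=` `[u, v] by apply: subset_itv; rewrite bnd_simp.
have iFP := int_B iF iP.
have iFP' : lebesgue_measure.-integrable `]u, v[ (EFin \o (fun x => F x - P x)).
  by apply: integrableS iFP.
have iQ' : lebesgue_measure.-integrable `]u, v[ (EFin \o Q).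
  by apply: integrableS iQ.
have mFP : measurable_fun `]u, v[ (fun x => F x - P x).
  by move/integrableP : iFP' => [/measurable_EFinP].
have mQ : measurable_fun `]u, v[ Q.
  by move/integrableP : iQ' => [/measurable_EFinP].
rewrite -RintegralB// Rint_oo// Rint_oo//.
apply: le_trans (le_normr_Rintegral _ _) _ => //.
apply: le_Rintegral => //.
- exact: integrable_norm.
Qed.

Lemma aux_eq (R : realType) (fx fu d x u : R) :
  fx - (3 * 0 * ((x - u) * (x - u)) + 2 * (d / 2) * (x - u) + fu) = fx - fu - d * (x - u).
Proof. by field. Qed.

Lemma norm4 (R : realType) (x1 x2 x3 x4 : R) :
  `|x1 + x2 + x3 + x4| <= `|x1| + `|x2| + `|x3| + `|x4|.
Proof.
apply: (le_trans (ler_normD _ _)); rewrite lerD2r.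
apply: (le_trans (ler_normD _ _)); rewrite lerD2r.
exact: ler_normD.
Qed.

Lemma fin_arith (R : realType) (J F1 F3 h B : R) : 0 < h ->
  `|J - 2 * h * (F1 + F3)| <= 4 * B ->
  `|(F1 + F3) / 2 - (4 * h)^-1 * J| <= B / h.
Proof.
move=> h0 H.
have -> : (F1 + F3) / 2 - (4 * h)^-1 * J = (J - 2 * h * (F1 + F3)) * (- (4 * h)^-1).
  by field; rewrite gt_eqF.
have h4 : 0 < (4 * h)^-1 by rewrite invr_gt0 mulr_gt0.
rewrite normrM normrN (gtr0_norm h4).
apply: le_trans (ler_wpM2r (ltW h4) H) _.
by rewrite le_eqVlt; apply/orP; left; apply/eqP; field; rewrite gt_eqF.
Qed.

Lemma const_arith (R : realType) (N s3 sL p : R) : 0 <= N -> 0 < s3 -> s3 ^+ 2 = 3 ->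
  0 < sL -> 0 < p -> p <= 4 ->
  N * ((sL ^+ 2 / 4) ^+ 3 / (12 * (sL / (2 * s3))) + sL / (2 * s3) * (sL ^+ 2 / 4) ^+ 2 / 4)
    / (sL ^+ 2 / 4)
  <= sL ^+ 2 * sL / (4 * s3 * p) * N.
Proof.
move=> N0 s30 s3s sL0 p0 p4.
have -> : N * ((sL ^+ 2 / 4) ^+ 3 / (12 * (sL / (2 * s3))) + sL / (2 * s3) * (sL ^+ 2 / 4) ^+ 2 / 4)
    / (sL ^+ 2 / 4) = N * sL ^+ 3 * (s3 ^+ 2 + 3) / (96 * s3).
  by field; rewrite ?gt_eqF.
rewrite s3s -subr_ge0.
have -> : sL ^+ 2 * sL / (4 * s3 * p) * N - N * sL ^+ 3 * (3 + 3) / (96 * s3) =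
  N * sL ^+ 3 * (4 - p) / (16 * p * s3).
  by field; rewrite ?gt_eqF.
apply: divr_ge0; last by rewrite !mulr_ge0// ltW.
by apply: mulr_ge0; [apply: mulr_ge0 => //; apply: exprn_ge0; exact: ltW|rewrite subr_ge0].
Qed.

Section Main.
Context (R : realType) (a b : R) (f : R -> R).
Hypothesis ab : a < b.
Hypothesis d1 : forall x, a < x < b -> derivable f x 1.
Hypothesis d2 : forall x, a < x < b -> derivable (derive1 f) x 1.
Hypothesis c2 : forall x, a < x < b -> {for x, continuous (derive1 (derive1 f))}.
Hypothesis m2 : measurable_fun `[a, b] (derive1 (derive1 f)).
Hypothesis fin2 : (\int[lebesgue_measure]_(t in `[a, b]) ((derive1 (derive1 f) t) ^+ 2)%:E < +oo)%E.

Local Notation f1 := (derive1 f).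
Local Notation f2 := (derive1 (derive1 f)).
Local Notation I := (Rintegral lebesgue_measure `[a, b] (fun t => f2 t ^+ 2)).
Local Notation N := (Num.sqrt I).

Lemma I_ge0 : 0 <= I.
Proof. by apply: Rintegral_ge0 => x _; exact: sqr_ge0. Qed.

Lemma df_sq c s : a < c < b -> a < s < b -> c < s -> (f1 s - f1 c) ^+ 2 <= (s - c) * I.
Proof.
move=> /andP[ac cb] /andP[as_ sb] cs.
have inab x : c <= x <= s -> a < x < b.
  by move=> /andP[h1 h2]; rewrite (lt_le_trans ac h1) (le_lt_trans h2 sb).
rewrite -(@ftc_R R f1 f2 c s cs); first last.
- by move=> x /andP[h1 h2]; rewrite /=.
- by move=> x hx; apply: c2; apply: inab.
- by move=> x hx; apply: d2; apply: inab.
apply: le_trans (cs_int cs _) _.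
  apply: continuous_in_subspaceT => x; rewrite inE/= in_itv/= => hx.
  by apply: c2; apply: inab.
apply: ler_wpM2l; first by rewrite subr_ge0 ltW.
apply: sub_int => //.
- apply: subset_itv; rewrite bnd_simp ltW//.
- exact: measurable_funX.
- by move=> x; exact: sqr_ge0.
Qed.

Lemma df_sq' c s : a < c < b -> a < s < b -> (f1 s - f1 c) ^+ 2 <= `|s - c| * I.
Proof.
move=> hc hs; have [cs|sc|->] := ltgtP c s.
- by rewrite gtr0_norm ?subr_gt0//; exact: df_sq.
- rewrite ltr0_norm ?subr_lt0// opprB.
  by rewrite -sqrrN opprB; exact: df_sq.
- by rewrite !subrr expr0n/= normr0 mul0r.
Qed.

Lemma df_bd k c s : 0 < k -> a < c < b -> a < s < b ->
  `|f1 s - f1 c| <= N * (`|s - c| / k + k) / 2.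
Proof.
move=> k0 hc hs.
have sq := df_sq' hc hs.
have NI : N ^+ 2 = I by rewrite sqr_sqrtr// I_ge0.
have N0 : 0 <= N by exact: sqrtr_ge0.
set y := `|f1 s - f1 c|; set t := `|s - c|.
have y0 : 0 <= y by exact: normr_ge0.
have t0 : 0 <= t by exact: normr_ge0.
have y2 : y ^+ 2 <= t * N ^+ 2 by rewrite NI /y real_normK// num_real.
set q := t / k.
have tq : t = q * k by rewrite /q divfK// gt_eqF.
have q0 : 0 <= q by rewrite /q divr_ge0// ltW.
rewrite tq in y2.
have B0 : 0 <= N * (q + k) / 2 by rewrite divr_ge0// mulr_ge0// addr_ge0// ltW.
have key : y ^+ 2 <= (N * (q + k) / 2) ^+ 2.
  apply: le_trans y2 _.
  have -> : (N * (q + k) / 2) ^+ 2 = q * k * N ^+ 2 + N ^+ 2 * (q - k) ^+ 2 / 4.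
    by field.
  rewrite lerDl; apply: divr_ge0 => //; apply: mulr_ge0; exact: sqr_ge0.
by move: key; rewrite ler_pXn2r// ?nnegrE.
Qed.

Lemma pt_r k c x : 0 < k -> a < c < b -> a < x < b -> c <= x ->
  `|f x - f c - f1 c * (x - c)| <= N * ((x - c) ^+ 2 / (4 * k) + k * (x - c) / 2).
Proof.
move=> k0 /andP[ac cb] /andP[ax xb] cx.
have inab s : c <= s <= x -> a < s < b.
  by move=> /andP[h1 h2]; rewrite (lt_le_trans ac h1) (le_lt_trans h2 xb).
pose G s := f s - f1 c * s.
pose al := N / (4 * k); pose be := N * k / 2.
pose P s := al * ((s - c) * (s - c)) + be * s + 0.
have dG s : c <= s <= x -> is_derive s 1 G (f1 s - f1 c).
  by move=> hs; apply: lin_der; apply: d1; apply: inab.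
have := @mvt_bound R G P (fun s => f1 s - f1 c) (fun s => 2 * al * (s - c) + be) c x cx.
have E1 : G x - G c = f x - f c - f1 c * (x - c) by rewrite /G; ring.
have E2 : P x - P c = N * ((x - c) ^+ 2 / (4 * k) + k * (x - c) / 2).
  by rewrite /P /al /be; field; rewrite gt_eqF.
rewrite E1 E2; apply.
- by move=> s; rewrite in_itv/= => /andP[h1 h2]; apply: dG; rewrite !ltW.
- by move=> s _; exact: quad_der.
- by apply: wc_der => s hs; have [] := dG s hs.
- by apply: wc_der => s hs; have [] := quad_der al be 0 c s.
- move=> s; rewrite in_itv/= => /andP[h1 h2].
  apply: le_trans (df_bd k0 _ _) _.
  + by rewrite ac cb.
  + by apply: inab; rewrite !ltW.
  rewrite gtr0_norm ?subr_gt0// /al /be le_eqVlt; apply/orP; left; apply/eqP.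
  by field; rewrite gt_eqF.
Qed.

Lemma pt_l k c x : 0 < k -> a < c < b -> a < x < b -> x <= c ->
  `|f x - f c - f1 c * (x - c)| <= N * ((x - c) ^+ 2 / (4 * k) + k * (c - x) / 2).
Proof.
move=> k0 /andP[ac cb] /andP[ax xb] xc.
have inab s : x <= s <= c -> a < s < b.
  by move=> /andP[h1 h2]; rewrite (lt_le_trans ax h1) (le_lt_trans h2 cb).
pose G s := f s - f1 c * s.
pose al := - (N / (4 * k)); pose be := N * k / 2.
pose P s := al * ((s - c) * (s - c)) + be * s + 0.
have dG s : x <= s <= c -> is_derive s 1 G (f1 s - f1 c).
  by move=> hs; apply: lin_der; apply: d1; apply: inab.
have := @mvt_bound R G P (fun s => f1 s - f1 c) (fun s => 2 * al * (s - c) + be) x c xc.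
have E1 : G c - G x = - (f x - f c - f1 c * (x - c)) by rewrite /G; ring.
have E2 : P c - P x = N * ((x - c) ^+ 2 / (4 * k) + k * (c - x) / 2).
  by rewrite /P /al /be; field; rewrite gt_eqF.
rewrite E1 E2 normrN; apply.
- by move=> s; rewrite in_itv/= => /andP[h1 h2]; apply: dG; rewrite !ltW.
- by move=> s _; exact: quad_der.
- by apply: wc_der => s hs; have [] := dG s hs.
- by apply: wc_der => s hs; have [] := quad_der al be 0 c s.
- move=> s; rewrite in_itv/= => /andP[h1 h2].
  apply: le_trans (df_bd k0 _ _) _.
  + by rewrite ac cb.
  + by apply: inab; rewrite !ltW.
  rewrite ltr0_norm ?subr_lt0// /al /be le_eqVlt; apply/orP; left; apply/eqP.
  by field; rewrite gt_eqF.
Qed.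

Lemma pt k c x : 0 < k -> a < c < b -> a < x < b ->
  `|f x - f c - f1 c * (x - c)| <= N * ((x - c) ^+ 2 / (4 * k) + k * `|x - c| / 2).
Proof.
move=> k0 hc hx; have [cx|xc] := leP c x.
  by rewrite [`|x - c|]ger0_norm ?subr_ge0//; exact: pt_r.
by rewrite [`|x - c|]ltr0_norm ?subr_lt0// opprB; apply: pt_l => //; exact: ltW.
Qed.

Lemma f_meas_oo : measurable_fun `]a, b[ f.
Proof.
apply: open_continuous_measurable_fun; first exact: interval_open.
move=> x; rewrite inE/= in_itv/= => hx; exact/der_cont/d1.
Qed.

Lemma f_meas : measurable_fun `[a, b] f.
Proof. exact: measurable_fun_itv_cc f_meas_oo. Qed.

Lemma f_bd : exists M, forall x, a <= x <= b -> `|f x| <= M.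
Proof.
have ab' := ab.
have hc : a < (a + b) / 2 < b by apply/andP; split; lra.
set c := (a + b) / 2 in hc *.
have N0 : 0 <= N by exact: sqrtr_ge0.
exists (`|f a| + `|f b| + (`|f c| + `|f1 c| * (b - a) + N * ((b - a) ^+ 2 / 4 + (b - a) / 2))).
move=> x /andP[ax xb].
have [->|ax'] := eqVneq x a.
  have : 0 <= `|f c| + `|f1 c| * (b - a) + N * ((b - a) ^+ 2 / 4 + (b - a) / 2).
    apply: addr_ge0; [apply: addr_ge0 => //; apply: mulr_ge0 => //; lra|].
    apply: mulr_ge0 => //; apply: addr_ge0; [apply: divr_ge0 => //; exact: sqr_ge0|lra].
  have := normr_ge0 (f b); lra.
have [->|bx'] := eqVneq x b.
  have : 0 <= `|f c| + `|f1 c| * (b - a) + N * ((b - a) ^+ 2 / 4 + (b - a) / 2).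
    apply: addr_ge0; [apply: addr_ge0 => //; apply: mulr_ge0 => //; lra|].
    apply: mulr_ge0 => //; apply: addr_ge0; [apply: divr_ge0 => //; exact: sqr_ge0|lra].
  have := normr_ge0 (f a); lra.
have hx : a < x < b by rewrite !lt_neqAle eq_sym ax' bx' ax xb.
have := pt (@ltr01 R) hc hx.
have dxc : `|x - c| <= b - a.
  by rewrite ler_norml; apply/andP; split; rewrite /c; lra.
have sq : (x - c) ^+ 2 <= (b - a) ^+ 2.
  rewrite -real_normK ?num_real//; apply: lerXn2r => //; rewrite ?nnegrE//; lra.
have t1 : `|f1 c * (x - c)| <= `|f1 c| * (b - a).
  by rewrite normrM; apply: ler_wpM2l.
have t2 : N * ((x - c) ^+ 2 / (4 * 1) + 1 * `|x - c| / 2) <= N * ((b - a) ^+ 2 / 4 + (b - a) / 2).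
  apply: ler_wpM2l => //; rewrite mulr1 mul1r; apply: lerD; last lra.
  by apply: ler_pM => //; exact: sqr_ge0.
have tri : `|f x| <= `|f x - f c - f1 c * (x - c)| + `|f c| + `|f1 c * (x - c)|.
  have e : f x = (f x - f c - f1 c * (x - c)) + f c + f1 c * (x - c) by ring.
  rewrite {1}e; apply: (le_trans (ler_normD _ _)); rewrite lerD2r; exact: ler_normD.
have := normr_ge0 (f a); have := normr_ge0 (f b).
set NN := N in N0 t2 *; clearbody NN c; lra.
Qed.

Lemma f_int : lebesgue_measure.-integrable `[a, b] (EFin \o f).
Proof.
apply: measurable_bounded_integrable => //.
- by apply: compact_finite_measure; exact: segment_compact.
- exact: f_meas.
- have [M hM] := f_bd; exists M; split; first exact: num_real.
  move=> y My x; rewrite /= in_itv/= => hx.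
  by apply: le_trans (hM x hx) (ltW My).
Qed.

Lemma int_sub u v : a <= u -> u < v -> v <= b ->
  lebesgue_measure.-integrable `[u, v] (EFin \o f).
Proof.
move=> au uv vb; apply: integrableS f_int => //.
by apply: subset_itv; rewrite bnd_simp.
Qed.

Lemma quarter_r k u v : 0 < k -> a < u -> u < v -> v <= b ->
  `|Rintegral lebesgue_measure `[u, v] f - ((v - u) * f u + f1 u * (v - u) ^+ 2 / 2)|
  <= N * ((v - u) ^+ 3 / (12 * k) + k * (v - u) ^+ 2 / 4).
Proof.
move=> k0 au uv vb.
have hu : a < u < b by rewrite au (lt_le_trans uv vb).
have := @int_est R f (fun x => 3 * 0 * ((x - u) * (x - u)) + 2 * (f1 u / 2) * (x - u) + f u)
  (fun x => 3 * (N / (12 * k)) * ((x - u) * (x - u)) + 2 * (N * k / 4) * (x - u) + 0) u v uv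
  (int_sub (ltW au) uv vb) (@poly_cont R _ _ _ _) (@poly_cont R _ _ _ _).
rewrite !poly_int//.
have E1 : 0 * ((v - u) * (v - u) * (v - u)) + f1 u / 2 * ((v - u) * (v - u)) + f u * v -
   (0 * ((u - u) * (u - u) * (u - u)) + f1 u / 2 * ((u - u) * (u - u)) + f u * u) =
   (v - u) * f u + f1 u * (v - u) ^+ 2 / 2 by ring.
have E2 : N / (12 * k) * ((v - u) * (v - u) * (v - u)) + N * k / 4 * ((v - u) * (v - u)) + 0 * v -
   (N / (12 * k) * ((u - u) * (u - u) * (u - u)) + N * k / 4 * ((u - u) * (u - u)) + 0 * u) =
   N * ((v - u) ^+ 3 / (12 * k) + k * (v - u) ^+ 2 / 4) by field; rewrite gt_eqF.
rewrite E1 E2; apply => x /andP[ux xv].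
have hx : a < x < b by rewrite (lt_trans au ux) (lt_le_trans xv vb).
rewrite aux_eq.
apply: le_trans (pt k0 hu hx) _.
rewrite [`|x - u|]gtr0_norm ?subr_gt0// le_eqVlt; apply/orP; left; apply/eqP.
by field; rewrite gt_eqF.
Qed.

Lemma quarter_l k u v : 0 < k -> a <= u -> u < v -> v < b ->
  `|Rintegral lebesgue_measure `[u, v] f - ((v - u) * f v - f1 v * (v - u) ^+ 2 / 2)|
  <= N * ((v - u) ^+ 3 / (12 * k) + k * (v - u) ^+ 2 / 4).
Proof.
move=> k0 au uv vb.
have hv : a < v < b by rewrite vb (le_lt_trans au uv).
have := @int_est R f (fun x => 3 * 0 * ((x - v) * (x - v)) + 2 * (f1 v / 2) * (x - v) + f v)
  (fun x => 3 * (N / (12 * k)) * ((x - v) * (x - v)) + 2 * (- (N * k / 4)) * (x - v) + 0) u v uv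
  (int_sub au uv (ltW vb)) (@poly_cont R _ _ _ _) (@poly_cont R _ _ _ _).
rewrite !poly_int//.
have E1 : 0 * ((v - v) * (v - v) * (v - v)) + f1 v / 2 * ((v - v) * (v - v)) + f v * v -
   (0 * ((u - v) * (u - v) * (u - v)) + f1 v / 2 * ((u - v) * (u - v)) + f v * u) =
   (v - u) * f v - f1 v * (v - u) ^+ 2 / 2 by ring.
have E2 : N / (12 * k) * ((v - v) * (v - v) * (v - v)) + - (N * k / 4) * ((v - v) * (v - v)) + 0 * v -
   (N / (12 * k) * ((u - v) * (u - v) * (u - v)) + - (N * k / 4) * ((u - v) * (u - v)) + 0 * u) =
   N * ((v - u) ^+ 3 / (12 * k) + k * (v - u) ^+ 2 / 4) by field; rewrite gt_eqF.
rewrite E1 E2; apply => x /andP[ux xv].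
have hx : a < x < b by rewrite (le_lt_trans au ux) (lt_trans xv vb).
rewrite aux_eq.
apply: le_trans (pt k0 hv hx) _.
rewrite [`|x - v|]ltr0_norm ?subr_lt0// le_eqVlt; apply/orP; left; apply/eqP.
by field; rewrite gt_eqF.
Qed.

Lemma split_int u w v : a <= u -> u < w -> w < v -> v <= b ->
  Rintegral lebesgue_measure `[u, v] f =
  Rintegral lebesgue_measure `[u, w] f + Rintegral lebesgue_measure `[w, v] f.
Proof.
move=> au uw wv vb.
have iuv := int_sub au (lt_trans uw wv) vb.
have := @Rintegral_itvB R f (BLeft u) (BRight v) w iuv.
rewrite !bnd_simp => /(_ (ltW uw) (ltW wv)).
rewrite Rintegral_itv_obnd_cbnd; last first.
  apply: integrableS iuv => //; apply: subset_itv; rewrite bnd_simp//; exact: ltW.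
move=> <-; ring.
Qed.

Lemma main_ineq :
  `| (f ((3 * a + b) / 4) + f ((a + 3 * b) / 4)) / 2
     - (b - a)^-1 * Rintegral lebesgue_measure `[a, b] f |
  <= (b - a) `^ (3 / 2) / (4 * Num.sqrt 3 * pi) * N.
Proof.
have ab' := ab.
set L := b - a.
have L0 : 0 < L by rewrite /L subr_gt0.
set h := L / 4.
have h0 : 0 < h by rewrite /h divr_gt0.
have ec1 : (3 * a + b) / 4 = a + h by rewrite /h /L; field.
have ec2 : (a + 3 * b) / 4 = a + 3 * h by rewrite /h /L; field.
have eb : b = a + 4 * h by rewrite /h /L; field.
set s3 := Num.sqrt (3 : R).
have s30 : 0 < s3 by rewrite sqrtr_gt0.
have s3s : s3 ^+ 2 = 3 by rewrite sqr_sqrtr.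
set sL := Num.sqrt L.
have sL0 : 0 < sL by rewrite sqrtr_gt0.
have sLs : sL ^+ 2 = L by rewrite sqr_sqrtr// ltW.
set k := sL / (2 * s3).
have k0 : 0 < k by rewrite /k divr_gt0// mulr_gt0.
have N0 : 0 <= N by exact: sqrtr_ge0.
set B := N * (h ^+ 3 / (12 * k) + k * h ^+ 2 / 4).
have e1 : a + h - a = h by ring.
have e2 : a + 2 * h - (a + h) = h by ring.
have e3 : a + 3 * h - (a + 2 * h) = h by ring.
have e4 : a + 4 * h - (a + 3 * h) = h by ring.
have l1 : a < a + h by rewrite ltrDl.
have l2 : a + h < a + 2 * h by rewrite ltrD2l ltr_pMl// ltr1n.
have l3 : a + 2 * h < a + 3 * h by rewrite ltrD2l ltr_pM2r// ltr_nat.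
have l4 : a + 3 * h < a + 4 * h by rewrite ltrD2l ltr_pM2r// ltr_nat.
have lb : a + 3 * h < b by rewrite eb.
have lb2 : a + 2 * h < b by rewrite (lt_trans l3 lb).
have lb1 : a + h < b by rewrite (lt_trans l2 lb2).
have Q1 := @quarter_l k a (a + h) k0 (lexx a) l1 lb1.
have Q2 := @quarter_r k (a + h) (a + 2 * h) k0 l1 l2 (ltW lb2).
have Q3 := @quarter_l k (a + 2 * h) (a + 3 * h) k0 (ltW (lt_trans l1 l2)) l3 lb.
have Q4 := @quarter_r k (a + 3 * h) b k0 (lt_trans l1 (lt_trans l2 l3)) lb (lexx b).
rewrite e1 in Q1; rewrite e2 in Q2; rewrite e3 in Q3.
have e4' : b - (a + 3 * h) = h by rewrite eb; ring.
rewrite e4' in Q4.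
rewrite (@split_int a (a + h) b (lexx a) l1 lb1 (lexx b)).
rewrite (@split_int (a + h) (a + 2 * h) b (ltW l1) l2 lb2 (lexx b)).
rewrite (@split_int (a + 2 * h) (a + 3 * h) b (ltW (lt_trans l1 l2)) l3 lb (lexx b)).
rewrite ec1 ec2 -/B in Q1 Q2 Q3 Q4 *.
set J1 := Rintegral lebesgue_measure `[a, a + h] f.
set J2 := Rintegral lebesgue_measure `[a + h, a + 2 * h] f.
set J3 := Rintegral lebesgue_measure `[a + 2 * h, a + 3 * h] f.
set J4 := Rintegral lebesgue_measure `[a + 3 * h, b] f.
set F1 := f (a + h); set F3 := f (a + 3 * h).
set D1 := f1 (a + h); set D3 := f1 (a + 3 * h).
have T : `|J1 + (J2 + (J3 + J4)) - 2 * h * (F1 + F3)| <= 4 * B.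
  have -> : J1 + (J2 + (J3 + J4)) - 2 * h * (F1 + F3) =
    (J1 - (h * F1 - D1 * h ^+ 2 / 2)) + (J2 - (h * F1 + D1 * h ^+ 2 / 2)) +
    (J3 - (h * F3 - D3 * h ^+ 2 / 2)) + (J4 - (h * F3 + D3 * h ^+ 2 / 2)) by ring.
  apply: le_trans (norm4 _ _ _ _) _.
  have -> : 4 * B = B + B + B + B by ring.
  by rewrite !lerD.
have eL : L^-1 = (4 * h)^-1 by rewrite /h; congr (_^-1); field.
rewrite eL; apply: le_trans (fin_arith h0 T) _.
have pw : L `^ (3 / 2) = L * sL.
  have -> : (3 / 2 : R) = 1 + 2^-1 by field.
  rewrite powRD; last by rewrite gt_eqF// implybT.
  by rewrite powRr1 ?powR12_sqrt// ltW.
rewrite pw /B /k /h -sLs.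
apply: const_arith => //; first exact: pi_gt0.
by have := @pihalf_lt2 R; rewrite ltr_pdivrMr// => /ltW; rewrite (_ : 2 * 2 = 4 :> R) //; ring.
Qed.

End Main.

Unset Implicit Arguments.

Theorem corollary2p5 (R : realType) (a b : R) (f : R -> R) :
  a < b ->
  (* f is twice continuously differentiable in (a,b) *)
  (forall x, a < x < b -> derivable f x 1) ->
  (forall x, a < x < b -> derivable (derive1 f) x 1) ->
  (forall x, a < x < b -> {for x, continuous (derive1 (derive1 f))}) ->
  (* f'' is in L^2[a,b] *)
  measurable_fun `[a, b] (derive1 (derive1 f)) ->
  (\int[lebesgue_measure]_(t in `[a, b]) ((derive1 (derive1 f) t) ^+ 2)%:E < +oo)%E ->
  `| (f ((3 * a + b) / 4) + f ((a + 3 * b) / 4)) / 2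
     - (b - a)^-1 * Rintegral lebesgue_measure `[a, b] f |
  <= (b - a) `^ (3 / 2) / (4 * Num.sqrt 3 * pi)
     * Num.sqrt (Rintegral lebesgue_measure `[a, b]
                   (fun t => (derive1 (derive1 f) t) ^+ 2)).
Proof.
move=> ab d1 d2 c2 m2 fin2.
exact: (main_ineq ab d1 d2 c2 m2 fin2).
Qed.
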